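(* Let $\ell>0$ and $\varepsilon\in(0,2)$. There exists a constant $C_p=C_p(\varepsilon,\ell)>0$ such that for every $\alpha\in[0,2-\varepsilon]$ and every $u\in H^1_\alpha(0,\ell)$, $$\int_0^\ell |u|^2\,dx\le C_p\int_0^\ell x^\alpha|\partial_x u|^2\,dx .$$
   Context: For $\ell>0$, the weighted spaces are: for $0\le\alpha<1$, $H^1_\alpha(0,\ell)=\{u\in L^2(0,\ell):\ \int_0^\ell x^\alpha|\partial_x u|^2\,dx<\infty,\ u(0)=u(\ell)=0\}$; for $1\le \alpha<2$, $H^1_\alpha(0,\ell)=\{u\in L^2(0,\ell):\ \int_0^\ell x^\alpha|\partial_x u|^2\,dx<\infty,\ u(\ell)=0\}$. *)

(* Defs.v *)
From HB Require Import structures.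
From mathcomp Require Import all_boot all_order all_algebra.
From mathcomp Require Import all_classical all_reals all_analysis.
Set Implicit Arguments. Unset Strict Implicit. Unset Printing Implicit Defensive.
Import Order.TTheory GRing.Theory Num.Theory.
Import numFieldNormedType.Exports.
Local Open Scope classical_set_scope.
Local Open Scope ring_scope.

(* [H1_alpha l alpha u v]: u belongs to the weighted space H^1_alpha(0,l),
   with v : R -> R its (weak) derivative on (0,l).
   - u is locally absolutely continuous on (0,l] with derivative v:
     for 0 < a <= b <= l, v is integrable on [a,b] and u b - u a = int_a^b v;
   - u is in L^2(0,l);
   - int_0^l x^alpha |v|^2 dx < oo;
   - boundary conditions: u(l) = 0, and if 0 <= alpha < 1 also u(0) = 0
     (in the sense of the trace u(0+) = lim_{x -> 0+} u x). *)
Definition H1_alpha (R : realType) (l alpha : R) (u v : R -> R) : Prop :=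
  [/\ measurable_fun `]0%R, l[ u /\ measurable_fun `]0%R, l[ v,
      (forall a b : R, 0 < a -> a <= b -> b <= l ->
         (lebesgue_measure).-integrable `[a, b] (EFin \o v) /\
         ((u b - u a)%:E = \int[lebesgue_measure]_(x in `[a%R, b]) (v x)%:E)%E),
      (\int[lebesgue_measure]_(x in `]0%R, l[) ((u x) ^+ 2)%:E < +oo)%E,
      (\int[lebesgue_measure]_(x in `]0%R, l[) ((x `^ alpha) * (v x) ^+ 2)%:E < +oo)%E
    & u l = 0 /\ (alpha < 1 -> u x @[x --> 0^'+] --> 0)].

(* Main.v *)
Require Import Defs.
From HB Require Import structures.
From mathcomp Require Import all_boot all_order all_algebra.
From mathcomp Require Import all_classical all_reals all_analysis.
From mathcomp Require Import measurable_realfun.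
From mathcomp.algebra_tactics Require Import ring lra.
Import Order.TTheory GRing.Theory Num.Theory.
Import numFieldNormedType.Exports.
Local Open Scope classical_set_scope.
Local Open Scope ring_scope.
Section S.
Context {R : realType}.
Notation mu := (@lebesgue_measure R).

Lemma powR_cont (p x : R) : 0 < x -> {for x, continuous (fun t : R => t `^ p)}.
Proof.
move=> x0; apply/differentiable_continuous/derivable1_diffP.
by apply: derivable_powR; rewrite in_itv/= andbT.
Qed.

Lemma ftc_pow (q a b : R) : q < 1 -> 0 < a -> a < b ->
  (\int[mu]_(x in `[a, b]) (x `^ (-q))%:E = ((b `^ (1-q) - a `^ (1-q)) / (1-q))%:E)%E.
Proof.
move=> q1 a0 ab.
have q0 : 1 - q != 0 by rewrite subr_eq0 gt_eqF.
pose F t := (1-q)^-1 * t `^ (1-q).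
have dF (x : R) : 0 < x -> is_derive x 1 F ((1-q)^-1 * ((1-q) * x `^ (1-q-1))).
  move=> x0; rewrite /F.
  have := is_deriveZ (1-q)^-1 (is_derive1_powR (1-q) x0).
  by [].
rewrite (@continuous_FTC2 _ _ F)//.
- by rewrite -EFinB /F -mulrBr mulrC.
  apply: continuous_in_subspaceT => x; rewrite inE /= in_itv/= => /andP[ax _].
  by apply: powR_cont; exact: lt_le_trans ax.
- split.
  + move=> x; rewrite in_itv/= => /andP[ax _].
    by have [] := dF x (lt_trans a0 ax).
  + apply: cvg_at_right_filter.
    apply/differentiable_continuous/derivable1_diffP.
    by have [] := dF a a0.
  + apply: cvg_at_left_filter.
    apply/differentiable_continuous/derivable1_diffP.
    by have [] := dF b (lt_trans a0 ab).
- move=> x; rewrite in_itv/= => /andP[ax _].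
  rewrite derive1E; have [_ ->] := dF x (lt_trans a0 ax).
  by rewrite mulrA mulVf// mul1r addrAC subrr add0r.
Qed.

Lemma int_pow_le (q l : R) : 0 <= q -> q < 1 -> 0 < l ->
  (\int[mu]_(x in `]0%R, l]) (x `^ (-q))%:E <= (l `^ (1-q) / (1-q))%:E)%E.
Proof.
move=> q0 q1 l0.
have q1' : 0 < 1 - q by rewrite subr_gt0.
pose A n := `[l / n.+2%:R, l]%classic : set R.
pose g n := (fun x : R => (x `^ (-q))%:E) \_ (A n).
have mf : measurable_fun [set: R] (fun x : R => (x `^ (-q))%:E).
  by apply/measurable_EFinP; exact: measurable_powR.
have mA n : measurable (A n) by exact: measurable_itv.
have mg n : measurable_fun `]0%R, l] (g n).
  apply: measurable_funTS.
  by apply/(measurable_restrictT _ (mA n)); exact: measurable_funTS.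
have g0 n x : `]0%R, l]%classic x -> (0 <= g n x)%E.
  by move=> _; rewrite /g /patch; case: ifP => // _; rewrite lee_fin powR_ge0.
have ndg x : `]0%R, l]%classic x -> nondecreasing_seq (g^~ x).
  move=> _ m n mn; rewrite /g /patch.
  case: ifPn => [xm|_]; last by case: ifP => // _; rewrite lee_fin powR_ge0.
  rewrite ifT//; move: xm; rewrite !inE /A /= !in_itv/= => /andP[+ ->].
  rewrite andbT; apply: le_trans.
  rewrite ler_pM2l// lef_pV2 ?posrE ?ltr0n// ler_nat.
  by rewrite ltnS.
have limg x : `]0%R, l]%classic x -> limn (g^~ x) = (x `^ (-q))%:E.
  rewrite /= in_itv/= => /andP[x0 xl].
  apply: lim_near_cst; first exact: ereal_hausdorff.
  have xl0 : 0 < x / l by rewrite divr_gt0.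
  near=> n.
  rewrite /g /patch ifT// inE /A /= in_itv/= xl andbT.
  have : n.+1%:R^-1 < (PosNum xl0)%:num by near: n; exact: near_infty_natSinv_lt.
  rewrite /= => H.
  rewrite ler_pdivrMr ?ltr0n// -ler_pdivrMl// ; apply: ltW.
  have : l / x < n.+1%:R.
    by rewrite -[n.+1%:R]invrK -invf_div ltf_pV2 ?posrE ?divr_gt0 ?invr_gt0 ?ltr0n.
  by rewrite mulrC => /lt_trans; apply; rewrite ltr_nat.
have -> : (\int[mu]_(x in `]0%R, l]) (x `^ (-q))%:E =
           \int[mu]_(x in `]0%R, l]) limn (g^~ x))%E.
  by apply: eq_integral => x /[!inE] xD; rewrite limg.
rewrite (monotone_convergence mu _ mg g0 ndg)//.
apply: lime_le.
  apply: ereal_nondecreasing_is_cvgn => m n mn; apply: ge0_le_integral => //.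
  - exact: g0.
  - exact: mg.
  - exact: mg.
  - by move=> t Dt; exact: ndg.
apply: nearW => n.
have an0 : 0 < l / n.+2%:R by rewrite divr_gt0.
have anl : l / n.+2%:R < l.
  by rewrite ltr_pdivrMr ?ltr0n// ltr_pMr// ltr1n.
rewrite /g -integral_mkcondr.
have -> : `]0%R, l] `&` A n = A n.
  apply/seteqP; split => x /=; first by case.
  move=> Ax; split => //; move: Ax; rewrite /A /= !in_itv/= => /andP[ax ->].
  by rewrite (lt_le_trans an0 ax).
rewrite ftc_pow//.
rewrite lee_fin ler_pM2r ?invr_gt0// gerBl powR_ge0//.
Unshelve. all: by end_near. Qed.

Lemma amgm_inv (a G I : R) : 0 <= a -> 0 < G -> 0 <= I ->
  (forall lam, 0 < lam -> 2 * a <= lam * G + I / lam) -> a ^+ 2 <= G * I.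
Proof.
move=> a0 G0 I0 H.
have [->|an0] := eqVneq a 0; first by rewrite expr0n /= mulr_ge0// ltW.
have ap : 0 < a by rewrite lt_neqAle eq_sym an0.
have := H (a / G) (divr_gt0 ap G0).
rewrite mulfVK ?gt_eqF// invf_div => h.
have : a <= I * (G / a) by rewrite -(lerD2r a) -mulr2n -mulr_natl addrC.
rewrite mulrA ler_pdivlMr// => h2.
by rewrite expr2 mulrC (le_trans h2)// mulrC.
Qed.

Lemma amgm2 (lam a b : R) : 0 < lam -> 2 * (a * b) <= lam * b ^+ 2 + a ^+ 2 / lam.
Proof.
move=> l0.
have : 0 <= (lam * b - a) ^+ 2 / lam by rewrite divr_ge0// ?sqr_ge0// ltW.
rewrite sqrrB mulrDl mulrBl.
have -> : (lam * b) ^+ 2 / lam = lam * b ^+ 2 by field; rewrite gt_eqF.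
have -> : lam * b * a *+ 2 / lam = 2 * (a * b) by field; rewrite gt_eqF.
by rewrite addrAC subr_ge0.
Qed.

Lemma pointwise (l al Ir x : R) (u v : R -> R) : 0 < l -> 0 <= al -> al < 2 ->
  0 < x -> x <= l ->
  mu.-integrable `[x, l] (EFin \o v) ->
  ((u l - u x)%:E = \int[mu]_(t in `[x, l]) (v t)%:E)%E ->
  u l = 0 ->
  (\int[mu]_(t in `[x, l]) ((t `^ al) * (v t) ^+ 2)%:E <= Ir%:E)%E ->
  u x ^+ 2 <= (x `^ (-(al/2)) * (l `^ (1 - al/2) / (1 - al/2))) * Ir.
Proof.
move=> l0 al0 al2 x0 xl iv Hu ul0 HI.
set q := al / 2.
have q0 : 0 <= q by rewrite divr_ge0.
have q1 : q < 1 by rewrite ltr_pdivrMr// mul1r.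
have q1' : 0 < 1 - q by rewrite subr_gt0.
set M := l `^ (1 - q) / (1 - q).
have M0 : 0 < M by rewrite divr_gt0// powR_gt0.
have mv : measurable_fun `[x, l] v by apply/measurable_EFinP; exact: measurable_int iv.
have mI : measurable_fun `[x, l] (fun t => ((t `^ al) * (v t) ^+ 2)%:E).
  apply/measurable_EFinP; apply: measurable_funM.
    exact: measurable_funTS (measurable_powR _).
  exact: measurable_funX.
have Ir0 : 0 <= Ir.
  rewrite -lee_fin; apply: le_trans HI; apply: integral_ge0 => t _.
  by rewrite lee_fin mulr_ge0// ?powR_ge0// sqr_ge0.
have itvx t : `[x, l]%classic t -> 0 < t.
  by rewrite /= in_itv/= => /andP[xt _]; exact: lt_le_trans xt.
rewrite -real_normK ?num_real//; apply: amgm_inv => //.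
  by rewrite mulr_gt0// powR_gt0.
move=> lam lam0.
have h1 : ((`|u x|)%:E <= \int[mu]_(t in `[x, l]) `|(v t)%:E|)%E.
  have -> : u x = - (u l - u x) by rewrite ul0 sub0r opprK.
  rewrite normrN -abse_EFin Hu; apply: le_abse_integral => //.
  exact: measurable_int iv.
pose c1 := lam * x `^ (-q) / 2.
pose c2 := (2 * lam)^-1.
have c10 : 0 <= c1 by rewrite /c1 divr_ge0// mulr_ge0 ?powR_ge0// ltW.
have c20 : 0 <= c2 by rewrite invr_ge0 mulr_ge0// ltW.
have h2 : (\int[mu]_(t in `[x, l]) `|(v t)%:E| <=
   \int[mu]_(t in `[x, l]) (c1%:E * (t `^ (-q))%:E + c2%:E * ((t `^ al) * (v t) ^+ 2)%:E))%E.
  apply: ge0_le_integral => //.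
  - apply: measurableT_comp => //; exact/measurable_EFinP.
  - apply: emeasurable_funD.
      apply: emeasurable_funM => //.
      by apply/measurable_EFinP; exact: measurable_funTS (measurable_powR _).
    exact: emeasurable_funM.
  move=> t /[dup] xtl /itvx t0.
  rewrite /= -!EFinM -EFinD lee_fin.
  have tq0 : 0 < t `^ q by rewrite powR_gt0.
  have xt : x <= t by move: xtl; rewrite /= in_itv/= => /andP[].
  have H := amgm2 lam (t `^ q * `|v t|) (t `^ (-q)) lam0.
  have e1 : t `^ q * `|v t| * t `^ (- q) = `|v t|.
    by rewrite powRN mulrAC mulfV ?gt_eqF// mul1r.
  have e2 : (t `^ q * `|v t|) ^+ 2 = t `^ al * v t ^+ 2.
    rewrite exprMn real_normK ?num_real// expr2 -powRD; last by rewrite (gt_eqF t0) implybT.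
    by congr (_ * _); congr (_ `^ _); rewrite /q; field.
  have e3 : t `^ (- q) ^+ 2 <= x `^ (- q) * t `^ (- q).
    rewrite expr2 ler_pM2r ?powR_gt0// !powRN lef_pV2 ?posrE ?powR_gt0//.
    by apply: ge0_ler_powR => //; rewrite nnegrE ltW.
  rewrite e1 e2 in H.
  have : 2 * `|v t| <= lam * (x `^ (- q) * t `^ (- q)) + t `^ al * v t ^+ 2 / lam.
    apply: le_trans H _; rewrite lerD2r ler_pM2l//.
  move=> H2; rewrite /c1 /c2.
  rewrite -(ler_pM2l (_ : 0 < 2)) // (le_trans H2)// mulrDr.
  by apply: lerD; rewrite le_eqVlt; apply/orP; left; apply/eqP; field; rewrite ?gt_eqF.
have mp : measurable_fun `[x, l] (fun t => (t `^ (-q))%:E).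
  by apply/measurable_EFinP; exact: measurable_funTS (measurable_powR _).
have h3 : (\int[mu]_(t in `[x, l]) (c1%:E * (t `^ (-q))%:E + c2%:E * ((t `^ al) * (v t) ^+ 2)%:E) =
   c1%:E * \int[mu]_(t in `[x, l]) (t `^ (-q))%:E +
   c2%:E * \int[mu]_(t in `[x, l]) ((t `^ al) * (v t) ^+ 2)%:E)%E.
  rewrite ge0_integralD //.
  - by rewrite !ge0_integralZl_EFin// => t _; rewrite lee_fin ?powR_ge0// mulr_ge0 ?powR_ge0// sqr_ge0.
  - by move=> t _; rewrite mule_ge0// lee_fin powR_ge0.
  - exact: emeasurable_funM.
  - by move=> t _; rewrite mule_ge0// lee_fin mulr_ge0 ?powR_ge0// sqr_ge0.
  - exact: emeasurable_funM.
have h4 : (\int[mu]_(t in `[x, l]) (t `^ (-q))%:E <= M%:E)%E.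
  apply: le_trans; last exact: (@int_pow_le q l q0 q1 l0).
  apply: ge0_subset_integral => //.
  - by apply/measurable_EFinP; exact: measurable_funTS (measurable_powR _).
  - by move=> t _; rewrite lee_fin powR_ge0.
  - by move=> t; rewrite /= !in_itv/= => /andP[xt ->]; rewrite (lt_le_trans x0 xt).
have : ((`|u x|)%:E <= (c1 * M + c2 * Ir)%:E)%E.
  apply: le_trans h1 _; apply: le_trans h2 _; rewrite h3 EFinD !EFinM.
  by apply: leeD; apply: lee_wpmul2l; rewrite ?lee_fin.
rewrite lee_fin => H.
rewrite -(ler_pM2l (_ : 0 < 2^-1)) ?invr_gt0// mulrA mulVf// mul1r (le_trans H)//.
rewrite le_eqVlt; apply/orP; left; apply/eqP; rewrite /c1 /c2; field.
by rewrite gt_eqF.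
Qed.

Lemma powR_le_max (l s : R) : 0 < l -> 0 <= s -> s <= 1 -> l `^ s <= 1 + l.
Proof.
move=> l0 s0 s1; have [l1|l1] := leP l 1.
  apply: le_trans (_ : 1 <= 1 + l); last by rewrite lerDl ltW.
  have := @ge0_ler_powR _ s s0 l 1; rewrite powR1 => ->//; rewrite nnegrE ltW//.
apply: le_trans (_ : l <= 1 + l); last by rewrite lerDr.
by apply: ler1_powR => //; exact: ltW.
Qed.
End S.

Theorem lemma2p2 (R : realType) (l eps : R) (hl : 0 < l) (heps : 0 < eps)
  (heps2 : eps < 2) :
  exists Cp : R, 0 < Cp /\
    forall (alpha : R) (u v : R -> R),
      0 <= alpha -> alpha <= 2 - eps ->
      H1_alpha l alpha u v ->
      (\int[lebesgue_measure]_(x in `]0%R, l[) ((u x) ^+ 2)%:E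
        <= Cp%:E * \int[lebesgue_measure]_(x in `]0%R, l[) ((x `^ alpha) * (v x) ^+ 2)%:E)%E.
Proof.
set B := 2 * (1 + l) / eps.
have B0 : 0 < B by rewrite divr_gt0// mulr_gt0// addr_gt0.
exists (B * B); split; first by rewrite mulr_gt0.
move=> al u v al0 ale [[mu_ mv] Hab Iu2 Iv [ul0 _]].
have al2 : al < 2 by apply: le_lt_trans ale _; rewrite ltrBlDr ltrDl.
set I := (\int[lebesgue_measure]_(x in `]0%R, l[) ((x `^ al) * (v x) ^+ 2)%:E)%E.
have I0 : (0 <= I)%E.
  by apply: integral_ge0 => t _; rewrite lee_fin mulr_ge0 ?powR_ge0// sqr_ge0.
have Ifin : I = (fine I)%:E by rewrite fineK// ge0_fin_numE.
set Ir := fine I.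
have Ir0 : 0 <= Ir by rewrite -lee_fin -Ifin.
set q := al / 2.
have q0 : 0 <= q by rewrite divr_ge0.
have q1 : q < 1 by rewrite ltr_pdivrMr// mul1r.
set M := l `^ (1 - q) / (1 - q).
have M0 : 0 < M by rewrite divr_gt0// ?powR_gt0// subr_gt0.
have MB : M <= B.
  have -> : B = (1 + l) * (2 / eps) by rewrite /B; field; rewrite gt_eqF.
  rewrite /M; apply: ler_pM.
  - exact: powR_ge0.
  - by rewrite invr_ge0 subr_ge0 ltW.
  - apply: powR_le_max => //; first by rewrite subr_ge0 ltW.
    by rewrite lerBlDr lerDl.
  rewrite -invf_div lef_pV2 ?posrE ?subr_gt0 ?divr_gt0//.
  by rewrite /q; lra.
have mvT : measurable_fun `]0%R, l[ (fun t => ((t `^ al) * (v t) ^+ 2)%:E).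
  apply/measurable_EFinP; apply: measurable_funM.
    exact: measurable_funTS (measurable_powR _).
  exact: measurable_funX.
have pw x : `]0%R, l[%classic x -> (((u x) ^+ 2)%:E <= ((M * Ir) * x `^ (-q))%:E)%E.
  rewrite /= in_itv/= => /andP[x0 xl].
  have [iv Hu] := Hab x l x0 (ltW xl) (lexx l).
  rewrite lee_fin mulrC mulrA.
  apply: pointwise iv Hu ul0 _ => //; first exact: ltW.
  rewrite -Ifin /I -integral_itv_bndo_bndc; last first.
    apply: measurable_funS mvT => //.
    by move=> t; rewrite /= !in_itv/= => /andP[xt ->]; rewrite (lt_le_trans x0 xt).
  apply: ge0_subset_integral => //.
  - by move=> t _; rewrite lee_fin mulr_ge0 ?powR_ge0// sqr_ge0.
  - by move=> t; rewrite /= !in_itv/= => /andP[xt ->]; rewrite (lt_le_trans x0 xt).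
apply: (@le_trans _ _ (\int[lebesgue_measure]_(x in `]0%R, l[) ((M * Ir) * x `^ (-q))%:E)%E).
  apply: ge0_le_integral => //.
  - by move=> t _; rewrite lee_fin sqr_ge0.
  - by apply/measurable_EFinP; exact: measurable_funX.
  - apply/measurable_EFinP; apply: measurable_funM => //.
    exact: measurable_funTS (measurable_powR _).
under eq_integral do rewrite EFinM.
have Mr0 : 0 <= M * Ir by rewrite mulr_ge0// ltW.
have mpT : measurable_fun `]0%R, l[ (fun x : R => (x `^ (-q))%:E).
  by apply/measurable_EFinP; exact: measurable_funTS (measurable_powR _).
rewrite ge0_integralZl_EFin//; last by move=> t _; rewrite lee_fin powR_ge0.
apply: (@le_trans _ _ ((M * Ir)%:E * M%:E)%E).
  apply: lee_wpmul2l; first by rewrite lee_fin mulr_ge0// ltW.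
  apply: le_trans; last exact: (@int_pow_le _ q l q0 q1 hl).
  apply: ge0_subset_integral => //.
  - by apply/measurable_EFinP; exact: measurable_funTS (measurable_powR _).
  - by move=> t _; rewrite lee_fin powR_ge0.
  - by apply: subset_itvl; rewrite bnd_simp.
rewrite Ifin -!EFinM lee_fin -/Ir mulrAC ler_wpM2r//.
by apply: ler_pM => //; exact: ltW.
Qed.
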